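(* Let $p_0,p_1,p_2\in\mathbb{Z}^2$ be such that $P:=\operatorname{conv}\{p_0,p_1,p_2\}$ is a triangle whose only integer points are $p_0,p_1,p_2$. Let $Q:=\operatorname{conv}\{q_0,q_1,q_2\}$ be a triangle with $p_i=(1-x_i)q_{i+1}+x_iq_{i+2}$ for $i=0,1,2$ (indices modulo $3$), where $0<x_i<1$. Then: (I) $Q$ is a maximal lattice-free triangle of type 3 if and only if either (a) $x_i+x_j>1$ for all $0\le i<j\le2$, or (b) $x_i+x_j<1$ for all $0\le i<j\le 2$. (II) If (a) holds, then $w(Q)=\dfrac{\min\{x_0,x_1,x_2\}}{x_0x_1x_2+(1-x_0)(1-x_1)(1-x_2)}$. (III) If (a) holds, then $w(Q)\le1+\frac{2}{\sqrt3}$, with equality if and only if $x_0=x_1=x_2=\frac1{\sqrt3}$.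
   Context: A closed convex set in $\mathbb{R}^2$ with non-empty interior is lattice-free if its interior contains no point of $\mathbb{Z}^2$, and maximal lattice-free if it is lattice-free and not properly contained in another lattice-free closed convex set with non-empty interior. A maximal lattice-free triangle of type 3 is a maximal lattice-free triangle having exactly three integer points on its boundary, one in the relative interior of each edge. For $u\in\mathbb{R}^2$, $w(Q,u):=\max_{x\in Q}u^\top x-\min_{x\in Q}u^\top x$ and the lattice width is $w(Q):=\min\{w(Q,u):u\in\mathbb{Z}^2\setminus\{o\}\}$. *)

(* Defs.v *)
(* points of R^2 are pairs (R * R) for R : realType,
   with the (product = Euclidean) topology of mathcomp-analysis. *)
From HB Require Import structures.
From mathcomp Require Import all_boot all_order all_algebra.
From mathcomp Require Import all_classical all_reals all_analysis.
Set Implicit Arguments. Unset Strict Implicit. Unset Printing Implicit Defensive.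
Import Order.TTheory GRing.Theory Num.Theory numFieldNormedType.Exports.
Local Open Scope classical_set_scope.
Local Open Scope ring_scope.

Section Defs.
Variable R : realType.
Local Notation pt := (R * R)%type.

Definition lattice_point (z : pt) : Prop :=
  exists m n : int, z = (m%:~R, n%:~R).

Definition comb (t : R) (a b : pt) : pt :=
  ((1 - t) * a.1 + t * b.1, (1 - t) * a.2 + t * b.2).

Definition dot (u x : pt) : R := u.1 * x.1 + u.2 * x.2.

Definition conv3 (a b c : pt) : set pt :=
  [set x | exists l0 l1 l2 : R, [/\ 0 <= l0, 0 <= l1, 0 <= l2, l0 + l1 + l2 = 1 &
     x = (l0 * a.1 + l1 * b.1 + l2 * c.1, l0 * a.2 + l1 * b.2 + l2 * c.2)]].

Definition nondeg_triangle (a b c : pt) : Prop :=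
  (b.1 - a.1) * (c.2 - a.2) - (b.2 - a.2) * (c.1 - a.1) != 0.

Definition convex_set2 (K : set pt) : Prop :=
  forall x y t, K x -> K y -> 0 <= t <= 1 -> K (comb t x y).

Definition ccbody (K : set pt) : Prop :=
  [/\ closed K, convex_set2 K & exists x, (K°) x].

Definition lattice_free (K : set pt) : Prop :=
  ccbody K /\ (forall z, lattice_point z -> ~ (K°) z).

Definition maximal_lattice_free (K : set pt) : Prop :=
  lattice_free K /\ (forall K', lattice_free K' -> K `<=` K' -> K' = K).

Definition open_segment (a b : pt) : set pt :=
  [set x | exists2 t, 0 < t < 1 & x = comb t a b].

Definition mlf_triangle_type3 (q0 q1 q2 : pt) : Prop :=
  let Q := conv3 q0 q1 q2 in
  [/\ nondeg_triangle q0 q1 q2, maximal_lattice_free Q &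
   exists z0 z1 z2 : pt,
     [/\ lattice_point z0 /\ open_segment q1 q2 z0,
         lattice_point z1 /\ open_segment q2 q0 z1,
         lattice_point z2 /\ open_segment q0 q1 z2 &
         forall z, lattice_point z -> Q z -> ~ (Q°) z ->
           z = z0 \/ z = z1 \/ z = z2]].

Definition width_dir (K : set pt) (u : pt) : R :=
  sup [set dot u x | x in K] - inf [set dot u x | x in K].

(* lattice width w(Q) (the infimum is attained for convex bodies) *)
Definition lattice_width (K : set pt) : R :=
  inf [set width_dir K u | u in [set u | lattice_point u /\ u <> (0, 0)]].

End Defs.

(* Main.v *)
Require Import Defs.
From HB Require Import structures.
From mathcomp Require Import all_boot all_order all_algebra.
From mathcomp Require Import all_classical all_reals all_analysis.
From mathcomp Require Import ring lra zify.
Import Order.TTheory GRing.Theory Num.Theory numFieldNormedType.Exports.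
Local Open Scope classical_set_scope.
Local Open Scope ring_scope.

Section Geo.
Context {R : realType}.
Local Notation pt := (R * R)%type.

Definition cross (a b c : pt) : R := (b.1-a.1)*(c.2-a.2) - (b.2-a.2)*(c.1-a.1).
Definition bary (a b c z : pt) : R := cross z b c / cross a b c.
Definition is_aff (f : pt -> R) := exists a b c : R, forall z, f z = a * z.1 + b * z.2 + c.

Lemma cross_rot a b c : cross b c a = cross a b c.
Proof. rewrite /cross; ring. Qed.

Lemma bary_comb a b c z l0 l1 l2 : cross a b c != 0 -> l0 + l1 + l2 = 1 ->
  z = (l0 * a.1 + l1 * b.1 + l2 * c.1, l0 * a.2 + l1 * b.2 + l2 * c.2) ->
  bary a b c z = l0.
Proof.
move=> h hs ->; rewrite /bary (_ : cross _ b c = l0 * cross a b c) ?mulfK //.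
have -> : l0 = 1 - l1 - l2 by lra.
rewrite /cross /=; ring.
Qed.

Lemma bary_sum a b c z : cross a b c != 0 ->
  bary a b c z + bary b c a z + bary c a b z = 1.
Proof.
move=> h; rewrite /bary (cross_rot a b c) (cross_rot b c a) (cross_rot a b c).
rewrite -!mulrDl (_ : cross z b c + cross z c a + cross z a b = cross a b c) ?divff //.
rewrite /cross; ring.
Qed.

Lemma bary_rep a b c z : cross a b c != 0 ->
  z = (bary a b c z * a.1 + bary b c a z * b.1 + bary c a b z * c.1,
       bary a b c z * a.2 + bary b c a z * b.2 + bary c a b z * c.2).
Proof.
move=> h; rewrite /bary (cross_rot a b c) (cross_rot b c a) (cross_rot a b c).
move: h; case: z => z1 z2; case: a => a1 a2; case: b => b1 b2; case: c => c1 c2.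
rewrite /cross /= => h; congr pair; field; exact: h.
Qed.

Lemma conv3P a b c z : cross a b c != 0 -> conv3 a b c z <->
  [/\ 0 <= bary a b c z, 0 <= bary b c a z & 0 <= bary c a b z].
Proof.
move=> h; have hb : cross b c a != 0 by rewrite cross_rot.
have hc : cross c a b != 0 by rewrite cross_rot cross_rot.
split.
- case=> l0 [l1 [l2 [h0 h1 h2 hs ->]]].
  rewrite (@bary_comb a b c _ l0 l1 l2) // (@bary_comb b c a _ l1 l2 l0) //;
    last (by congr pair; ring); last by lra.
  rewrite (@bary_comb c a b _ l2 l0 l1) //; last (by congr pair; ring); by lra.
- case=> h0 h1 h2; exists (bary a b c z), (bary b c a z), (bary c a b z); split => //.
  + exact: bary_sum.
  + exact: bary_rep.
Qed.

Lemma aff_comb f t x y : is_aff f -> f (comb t x y) = (1 - t) * f x + t * f y.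
Proof. case=> a [b [c hf]]; rewrite !hf /comb /=; ring. Qed.

Lemma aff_bary a b c : is_aff (bary a b c).
Proof.
exists ((b.2 - c.2) / cross a b c), ((c.1 - b.1) / cross a b c),
  ((b.1 * c.2 - b.2 * c.1) / cross a b c) => z.
rewrite /bary /cross; ring.
Qed.

Lemma aff_lin f g al be ga : is_aff f -> is_aff g ->
  is_aff (fun z => al * f z + be * g z + ga).
Proof.
case=> a [b [c hf]] [a' [b' [c' hg]]].
exists (al * a + be * a'), (al * b + be * b'), (al * c + be * c' + ga) => z.
rewrite hf hg; ring.
Qed.

Lemma aff_dot u : is_aff (dot u).
Proof. by exists u.1, u.2, 0 => z; rewrite /dot addr0. Qed.

Lemma nbhsP (z : pt) (A : set pt) : nbhs z A <-> exists2 e : R, 0 < e &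
  forall y : pt, `|z.1 - y.1| < e -> `|z.2 - y.2| < e -> A y.
Proof.
rewrite nbhs_ballP; split.
- case=> e /= e0 H; exists e => // y h1 h2; apply: H.
  rewrite /ball /= /prod_ball. split; rewrite -ball_normE //.
- case=> e e0 H; exists e => // y [] /=; rewrite -!ball_normE /ball_ => h1 h2; exact: H.
Qed.

Lemma nbhs_aff f z : is_aff f -> 0 < f z -> nbhs z [set y | 0 < f y].
Proof.
case=> a [b [c hf]] hz; apply/nbhsP.
have hk : 0 < 1 + `|a| + `|b| by rewrite -addrA ltr_pwDl // addr_ge0.
exists (f z / (1 + `|a| + `|b|)); first by rewrite divr_gt0.
set e := f z / _ => y h1 h2 /=.
have k1 : a * (z.1 - y.1) <= `|a| * e.
  by rewrite (le_trans (ler_norm _)) // normrM ler_wpM2l // ltW.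
have k2 : b * (z.2 - y.2) <= `|b| * e.
  by rewrite (le_trans (ler_norm _)) // normrM ler_wpM2l // ltW.
have k3 : (1 + `|a| + `|b|) * e = f z by rewrite /e mulrC mulfVK // gt_eqF.
have e0 : 0 < e by rewrite divr_gt0.
clearbody e; rewrite hf in k3 hz; rewrite hf; lra.
Qed.

Lemma nbhs_not (A : set pt) f z w : is_aff f -> f z <= 0 -> 0 < f w ->
  (forall y, A y -> 0 <= f y) -> ~ nbhs z A.
Proof.
move=> af hz hw hA /nbhsP [e e0 H].
have hk : 0 < 1 + `|w.1 - z.1| + `|w.2 - z.2| by rewrite -addrA ltr_pwDl // addr_ge0.
set t := e / (1 + `|w.1 - z.1| + `|w.2 - z.2|).
have t0 : 0 < t by rewrite divr_gt0.
have k3 : (1 + `|w.1 - z.1| + `|w.2 - z.2|) * t = e by rewrite /t mulrC mulfVK // gt_eqF.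
have : A (comb (- t) z w).
  apply: H; rewrite /comb /=.
  - rewrite (_ : _ - _ = t * (w.1 - z.1)); last by ring.
    rewrite normrM gtr0_norm //.
    have : 0 <= `|w.2 - z.2| by [].
    have : 0 <= `|w.1 - z.1| by [].
    nra.
  - rewrite (_ : _ - _ = t * (w.2 - z.2)); last by ring.
    rewrite normrM gtr0_norm //.
    have : 0 <= `|w.2 - z.2| by [].
    have : 0 <= `|w.1 - z.1| by [].
    nra.
move/hA; rewrite aff_comb //; nra.
Qed.


Lemma pairP (x : pt) u v : x.1 = u -> x.2 = v -> x = (u, v).
Proof. by case: x => /= ? ? -> ->. Qed.

Lemma bary_rot1 a b c : cross a b c != 0 -> cross b c a != 0.
Proof. by rewrite (cross_rot a b c). Qed.

Lemma conv3_pos_int a b c z : cross a b c != 0 ->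
  0 < bary a b c z -> 0 < bary b c a z -> 0 < bary c a b z -> (conv3 a b c)° z.
Proof.
move=> h h0 h1 h2; rewrite /interior /=.
have N0 := @nbhs_aff _ _ (aff_bary a b c) h0.
have N1 := @nbhs_aff _ _ (aff_bary b c a) h1.
have N2 := @nbhs_aff _ _ (aff_bary c a b) h2.
apply: filterS (filterI N0 (filterI N1 N2)) => y [/= y0 [/= y1 y2]].
by apply/conv3P => //; split; apply: ltW.
Qed.

Lemma conv3_int_pos a b c z : cross a b c != 0 -> (conv3 a b c)° z ->
  [/\ 0 < bary a b c z, 0 < bary b c a z & 0 < bary c a b z].
Proof.
move=> h hi.
have hb : cross b c a != 0 by rewrite (cross_rot a b c).
have hc : cross c a b != 0 by rewrite (cross_rot b c a) (cross_rot a b c).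
have ha1 : bary a b c a = 1.
  by apply: (@bary_comb _ _ _ _ 1 0 0) => //; [lra | apply: pairP => /=; ring].
have hb1 : bary b c a b = 1.
  by apply: (@bary_comb _ _ _ _ 1 0 0) => //; [lra | apply: pairP => /=; ring].
have hc1 : bary c a b c = 1.
  by apply: (@bary_comb _ _ _ _ 1 0 0) => //; [lra | apply: pairP => /=; ring].
split; rewrite ltNge; apply/negP => hle.
- apply: (@nbhs_not _ (bary a b c) z a (aff_bary a b c) hle) hi; first by rewrite ha1.
  by move=> y /(conv3P _ _ _ _ h) [].
- apply: (@nbhs_not _ (bary b c a) z b (aff_bary b c a) hle) hi; first by rewrite hb1.
  by move=> y /(conv3P _ _ _ _ h) [].
- apply: (@nbhs_not _ (bary c a b) z c (aff_bary c a b) hle) hi; first by rewrite hc1.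
  by move=> y /(conv3P _ _ _ _ h) [].
Qed.

Lemma conv3_closed a b c : cross a b c != 0 -> closed (conv3 a b c).
Proof.
move=> h z hz; apply/(conv3P _ _ _ _ h).
have key : forall f, is_aff f -> (forall y, conv3 a b c y -> 0 <= f y) -> 0 <= f z.
  move=> f af hf; rewrite leNgt; apply/negP => hneg.
  have af' : is_aff (fun y => (-1) * f y + 0 * f y + 0) by apply: aff_lin.
  have := @nbhs_aff _ z af' (_ : 0 < (-1) * f z + 0 * f z + 0).
  move=> /(_ ltac:(lra)) N.
  case: (hz _ N) => y [/hf hy /= hy2]; lra.
split; apply: key; try exact: aff_bary; by move=> y /(conv3P _ _ _ _ h) [].
Qed.

Lemma conv3_convex a b c : cross a b c != 0 -> convex_set2 (conv3 a b c).
Proof.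
move=> h x y t /(conv3P _ _ _ _ h) [x0 x1 x2] /(conv3P _ _ _ _ h) [y0 y1 y2] /andP [t0 t1].
apply/(conv3P _ _ _ _ h); rewrite !aff_comb; try exact: aff_bary.
split; apply: addr_ge0; apply: mulr_ge0 => //; lra.
Qed.

Lemma conv3_ccbody a b c : cross a b c != 0 -> ccbody (conv3 a b c).
Proof.
move=> h; split; [exact: conv3_closed | exact: conv3_convex |].
have hb : cross b c a != 0 by rewrite (cross_rot a b c).
have hc : cross c a b != 0 by rewrite (cross_rot b c a) (cross_rot a b c).
pose g := (a.1 / 3 + b.1 / 3 + c.1 / 3, a.2 / 3 + b.2 / 3 + c.2 / 3).
exists g; apply: conv3_pos_int => //.
- rewrite (@bary_comb _ _ _ _ (1/3) (1/3) (1/3)) //; [lra | rewrite /g; apply: pairP => /=; ring].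
- rewrite (@bary_comb _ _ _ _ (1/3) (1/3) (1/3)) //; [lra | rewrite /g; apply: pairP => /=; ring].
- rewrite (@bary_comb _ _ _ _ (1/3) (1/3) (1/3)) //; [lra | rewrite /g; apply: pairP => /=; ring].
Qed.


Lemma max_edge a b c p (K : set pt) y : cross a b c != 0 -> convex_set2 K ->
  conv3 a b c `<=` K -> K y -> bary a b c y < 0 -> bary a b c p = 0 ->
  0 < bary b c a p -> 0 < bary c a b p -> nbhs p K.
Proof.
move=> h hK hQ hy hy0 hp0 hp1 hp2.
have af0 := aff_bary a b c; have af1 := aff_bary b c a; have af2 := aff_bary c a b.
set L0 := bary a b c in af0 hy0 hp0 *.
set L1 := bary b c a in af1 hp1 *.
set L2 := bary c a b in af2 hp2 *.
set y0 := L0 y in hy0 *; set y1 := L1 y; set y2 := L2 y.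
have N1 := @nbhs_aff _ _ af1 hp1.
have N2 := @nbhs_aff _ _ af2 hp2.
have N3 := @nbhs_aff (fun w => 1 * L0 w + 0 * L0 w + (- y0)) p
  (@aff_lin L0 L0 1 0 (- y0) af0 af0) ltac:(rewrite /= hp0; lra).
have N4 := @nbhs_aff (fun w => y1 * L0 w + (- y0) * L1 w + 0) p
  (@aff_lin L0 L1 y1 (- y0) 0 af0 af1) ltac:(rewrite /= hp0; nra).
have N5 := @nbhs_aff (fun w => y2 * L0 w + (- y0) * L2 w + 0) p
  (@aff_lin L0 L2 y2 (- y0) 0 af0 af2) ltac:(rewrite /= hp0; nra).
apply: filterS (filterI N1 (filterI N2 (filterI N3 (filterI N4 N5)))).
move=> w [/= w1 [/= w2 [/= w3 [/= w4 w5]]]].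
case: (leP 0 (L0 w)) => hw0.
  by apply: hQ; apply/(conv3P _ _ _ _ h); split => //; apply: ltW.
set s := L0 w / y0.
have hs : s * y0 = L0 w by rewrite /s mulfVK // ltr0_neq0.
have s0 : 0 < s by rewrite /s -[L0 w]opprK -[y0]opprK mulNr -mulrN invrN opprK divr_gt0 // oppr_gt0.
have s1 : s < 1 by nra.
have s1' : 1 - s != 0 by rewrite subr_eq0 gt_eqF.
pose v := ((w.1 - s * y.1) / (1 - s), (w.2 - s * y.2) / (1 - s)).
have hw : w = comb s v y.
  rewrite /comb /v; apply: pairP => /=; field; exact: s1'.
have e0 := @aff_comb L0 s v y af0; rewrite -hw in e0.
have e1 := @aff_comb L1 s v y af1; rewrite -hw in e1.
have e2 := @aff_comb L2 s v y af2; rewrite -hw in e2.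
rewrite -/y1 in e1; rewrite -/y2 in e2; rewrite -/y0 in e0.
have hv : conv3 a b c v.
  apply/(conv3P _ _ _ _ h); rewrite -/L0 -/L1 -/L2; split.
  - rewrite -hs in e0.
    have : (1 - s) * L0 v = 0 by apply: (@addIr _ (s * y0)); rewrite add0r -e0.
    by move/eqP; rewrite mulf_eq0 (negbTE s1') /= => /eqP ->.
  - have : (1 - s) * y0 * L1 v = L1 w * y0 - L0 w * y1 by rewrite -hs e1; ring.
    nra.
  - have : (1 - s) * y0 * L2 v = L2 w * y0 - L0 w * y2 by rewrite -hs e2; ring.
    nra.
rewrite hw; apply: hK => //; first exact: hQ.
by rewrite (ltW s0) (ltW s1).
Qed.


Definition isZ (x : R) := exists k : int, x = k%:~R.

Lemma isZ_int (k : int) : isZ k%:~R. Proof. by exists k. Qed.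
Lemma isZ0 : isZ 0. Proof. by exists 0. Qed.
Lemma isZ1 : isZ 1. Proof. by exists 1. Qed.
Lemma isZ_add x y : isZ x -> isZ y -> isZ (x + y).
Proof. by case=> k -> [l ->]; exists (k + l); rewrite intrD. Qed.
Lemma isZ_opp x : isZ x -> isZ (- x).
Proof. by case=> k ->; exists (- k); rewrite intrN. Qed.
Lemma isZ_sub x y : isZ x -> isZ y -> isZ (x - y).
Proof. by move=> hx hy; apply: isZ_add => //; apply: isZ_opp. Qed.
Lemma isZ_mul x y : isZ x -> isZ y -> isZ (x * y).
Proof. by case=> k -> [l ->]; exists (k * l); rewrite intrM. Qed.
Lemma isZ_floor (x : R) : isZ (Num.floor x)%:~R. Proof. exact: isZ_int. Qed.

Ltac zt := repeat first [assumption | apply: isZ_int | apply: isZ1 | apply: isZ0 |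
  apply: isZ_add | apply: isZ_opp | apply: isZ_mul].

Lemma latticeP (z : pt) : lattice_point z <-> isZ z.1 /\ isZ z.2.
Proof.
split; first by case=> m [n ->]; split; apply: isZ_int.
by case: z => z1 z2 [[m /= ->] [n /= ->]]; exists m, n.
Qed.

Lemma isZ_cases x : isZ x -> x <= -1 \/ x = 0 \/ 1 <= x.
Proof.
case=> k ->.
have [h|[h|h]] : (k <= -1 \/ k = 0 \/ 1 <= k)%R by lia.
- by left; rewrite -(ler_int R) in h.
- by right; left; rewrite h.
- by right; right; rewrite -(ler_int R) in h.
Qed.

Lemma isZ_unit x y : isZ x -> isZ y -> x * y = 1 -> x = 1 \/ x = -1.
Proof.
case=> k -> [l ->] e.
have h : (k * l = 1)%R by apply: (@intr_inj R); rewrite intrM e.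
have hk : (`|k| = 1)%N.
  have := congr1 absz h; rewrite abszM /= => /eqP; rewrite muln_eq1 => /andP [/eqP -> _] //.
have : (k = 1 \/ k = -1)%R by lia.
by case=> ->; [left | right].
Qed.

Lemma indep (A B C D c1 c2 : R) : c1 * A + c2 * C = 0 -> c1 * B + c2 * D = 0 ->
  A * D - B * C != 0 -> c1 = 0 /\ c2 = 0.
Proof.
move=> h1 h2 hd.
have e1 : c1 * (A * D - B * C) = D * (c1 * A + c2 * C) - C * (c1 * B + c2 * D) by ring.
have e2 : c2 * (A * D - B * C) = A * (c1 * B + c2 * D) - B * (c1 * A + c2 * C) by ring.
rewrite h1 h2 !mulr0 subr0 in e1 e2.
move: e1 e2 => /eqP; rewrite mulf_eq0 (negbTE hd) orbF => /eqP ->.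
by move/eqP; rewrite mulf_eq0 (negbTE hd) orbF => /eqP ->.
Qed.

Definition empty3 (P0 P1 P2 : pt) :=
  forall z, lattice_point z -> conv3 P0 P1 P2 z -> z = P0 \/ z = P1 \/ z = P2.

Lemma frac_int (a0 b0 a1 b1 a2 b2 al be : R) :
  isZ a0 -> isZ b0 -> isZ a1 -> isZ b1 -> isZ a2 -> isZ b2 ->
  cross (a0, b0) (a1, b1) (a2, b2) != 0 -> empty3 (a0, b0) (a1, b1) (a2, b2) ->
  isZ (al * (a1 - a0) + be * (a2 - a0)) -> isZ (al * (b1 - b0) + be * (b2 - b0)) ->
  isZ al /\ isZ be.
Proof.
rewrite /cross /= => za0 zb0 za1 zb1 za2 zb2 hd hE zv1 zv2.
set fa := al - (Num.floor al)%:~R; set fb := be - (Num.floor be)%:~R.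
have fa0 : 0 <= fa by rewrite subr_ge0 floor_le.
have fa1 : fa < 1 by rewrite ltrBlDl -intrD1 floorD1_gt.
have fb0 : 0 <= fb by rewrite subr_ge0 floor_le.
have fb1 : fb < 1 by rewrite ltrBlDr addrC -intrD1 floorD1_gt.
suff [ea eb] : fa = 0 /\ fb = 0.
  split.
  - by exists (Num.floor al); apply/eqP; rewrite -subr_eq0 -/fa ea.
  - by exists (Num.floor be); apply/eqP; rewrite -subr_eq0 -/fb eb.
have zA : isZ (a1 - a0) by apply: isZ_sub.
have zB : isZ (b1 - b0) by apply: isZ_sub.
have zC : isZ (a2 - a0) by apply: isZ_sub.
have zD : isZ (b2 - b0) by apply: isZ_sub.
have zfa : isZ (Num.floor al)%:~R := isZ_floor al.
have zfb : isZ (Num.floor be)%:~R := isZ_floor be.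
have [hle|hgt] := leP (fa + fb) 1.
- have L : lattice_point (a0 + fa * (a1 - a0) + fb * (a2 - a0), b0 + fa * (b1 - b0) + fb * (b2 - b0)).
    apply/latticeP; split => /=.
    + rewrite (_ : _ + _ = a0 + (al * (a1 - a0) + be * (a2 - a0)) - (Num.floor al)%:~R * (a1 - a0)
         - (Num.floor be)%:~R * (a2 - a0)); last by rewrite /fa /fb; ring.
      by zt.
    + rewrite (_ : _ + _ = b0 + (al * (b1 - b0) + be * (b2 - b0)) - (Num.floor al)%:~R * (b1 - b0)
         - (Num.floor be)%:~R * (b2 - b0)); last by rewrite /fa /fb; ring.
      by zt.
  have Cv : conv3 (a0, b0) (a1, b1) (a2, b2)
      (a0 + fa * (a1 - a0) + fb * (a2 - a0), b0 + fa * (b1 - b0) + fb * (b2 - b0)).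
    exists (1 - fa - fb), fa, fb; split; [lra|lra|lra|lra|apply: pairP => /=; ring].
  case: (hE _ L Cv) => [[e1 e2]|[[e1 e2]|[e1 e2]]].
  + by apply: (@indep (a1 - a0) (b1 - b0) (a2 - a0) (b2 - b0)); [lra|lra|exact: hd].
  + have [] := @indep (a1 - a0) (b1 - b0) (a2 - a0) (b2 - b0) (fa - 1) fb; [lra|lra|exact: hd|lra].
  + have [] := @indep (a1 - a0) (b1 - b0) (a2 - a0) (b2 - b0) fa (fb - 1); [lra|lra|exact: hd|lra].
- have L : lattice_point (a0 + (1 - fa) * (a1 - a0) + (1 - fb) * (a2 - a0),
                          b0 + (1 - fa) * (b1 - b0) + (1 - fb) * (b2 - b0)).
    apply/latticeP; split => /=.
    + rewrite (_ : _ + _ = a0 + (a1 - a0) + (a2 - a0) - (al * (a1 - a0) + be * (a2 - a0))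
         + (Num.floor al)%:~R * (a1 - a0) + (Num.floor be)%:~R * (a2 - a0)); last by rewrite /fa /fb; ring.
      by zt.
    + rewrite (_ : _ + _ = b0 + (b1 - b0) + (b2 - b0) - (al * (b1 - b0) + be * (b2 - b0))
         + (Num.floor al)%:~R * (b1 - b0) + (Num.floor be)%:~R * (b2 - b0)); last by rewrite /fa /fb; ring.
      by zt.
  have Cv : conv3 (a0, b0) (a1, b1) (a2, b2)
      (a0 + (1 - fa) * (a1 - a0) + (1 - fb) * (a2 - a0),
       b0 + (1 - fa) * (b1 - b0) + (1 - fb) * (b2 - b0)).
    exists (fa + fb - 1), (1 - fa), (1 - fb); split; [lra|lra|lra|lra|apply: pairP => /=; ring].
  case: (hE _ L Cv) => [[e1 e2]|[[e1 e2]|[e1 e2]]].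
  + have [] := @indep (a1 - a0) (b1 - b0) (a2 - a0) (b2 - b0) (1 - fa) (1 - fb); [lra|lra|exact: hd|lra].
  + have [] := @indep (a1 - a0) (b1 - b0) (a2 - a0) (b2 - b0) (- fa) (1 - fb); [lra|lra|exact: hd|lra].
  + have [] := @indep (a1 - a0) (b1 - b0) (a2 - a0) (b2 - b0) (1 - fa) (- fb); [lra|lra|exact: hd|lra].
Qed.


Lemma unimod (a0 b0 a1 b1 a2 b2 : R) :
  isZ a0 -> isZ b0 -> isZ a1 -> isZ b1 -> isZ a2 -> isZ b2 ->
  cross (a0, b0) (a1, b1) (a2, b2) != 0 -> empty3 (a0, b0) (a1, b1) (a2, b2) ->
  cross (a0, b0) (a1, b1) (a2, b2) = 1 \/ cross (a0, b0) (a1, b1) (a2, b2) = -1.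
Proof.
move=> za0 zb0 za1 zb1 za2 zb2 hd hE.
have F := fun al be => @frac_int a0 b0 a1 b1 a2 b2 al be za0 zb0 za1 zb1 za2 zb2 hd hE.
move: hd; rewrite /cross /= => hd.
have [zal zbe] := F ((b2 - b0) / ((a1 - a0) * (b2 - b0) - (b1 - b0) * (a2 - a0)))
  (- (b1 - b0) / ((a1 - a0) * (b2 - b0) - (b1 - b0) * (a2 - a0))) ltac:(
   rewrite (_ : _ + _ = 1); [exact: isZ1 | field; exact: hd]) ltac:(
   rewrite (_ : _ + _ = 0); [exact: isZ0 | field; exact: hd]).
have [zga zde] := F (- (a2 - a0) / ((a1 - a0) * (b2 - b0) - (b1 - b0) * (a2 - a0)))
  ((a1 - a0) / ((a1 - a0) * (b2 - b0) - (b1 - b0) * (a2 - a0))) ltac:(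
   rewrite (_ : _ + _ = 0); [exact: isZ0 | field; exact: hd]) ltac:(
   rewrite (_ : _ + _ = 1); [exact: isZ1 | field; exact: hd]).
have := @isZ_unit ((a1 - a0) * (b2 - b0) - (b1 - b0) * (a2 - a0)) _ _ (isZ_sub _ _ (isZ_mul _ _ zal zde) (isZ_mul _ _ zbe zga)).
apply; first by zt.
field; exact: hd.
Qed.

Lemma decomp (a0 b0 a1 b1 a2 b2 d : R) :
  cross (a0, b0) (a1, b1) (a2, b2) = d -> (d = 1 \/ d = -1) ->
  isZ a0 -> isZ b0 -> isZ a1 -> isZ b1 -> isZ a2 -> isZ b2 ->
  forall z, lattice_point z -> exists m0 m1 m2,
    [/\ isZ m0, isZ m1, isZ m2, m0 + m1 + m2 = 1 &
      z = (m0 * a0 + m1 * a1 + m2 * a2, m0 * b0 + m1 * b1 + m2 * b2)].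
Proof.
move=> hd hd1 za0 zb0 za1 zb1 za2 zb2 [z1 z2] /latticeP [/= zz1 zz2].
have zd : isZ d by case: hd1 => ->; zt.
have dd : d * d = 1 by case: hd1 => ->; lra.
set m1 := d * ((z1 - a0) * (b2 - b0) - (z2 - b0) * (a2 - a0)).
set m2 := d * ((a1 - a0) * (z2 - b0) - (b1 - b0) * (z1 - a0)).
exists (1 - m1 - m2), m1, m2; split.
- by rewrite /m1 /m2; zt.
- by rewrite /m1; zt.
- by rewrite /m2; zt.
- ring.
- move: hd; rewrite /cross /= => hd.
  apply: pairP => /=.
  + have : (1 - m1 - m2) * a0 + m1 * a1 + m2 * a2 =
      a0 + (z1 - a0) * (d * ((a1 - a0) * (b2 - b0) - (b1 - b0) * (a2 - a0))) by rewrite /m1 /m2; ring.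
    by rewrite hd dd mulr1 => ->; ring.
  + have : (1 - m1 - m2) * b0 + m1 * b1 + m2 * b2 =
      b0 + (z2 - b0) * (d * ((a1 - a0) * (b2 - b0) - (b1 - b0) * (a2 - a0))) by rewrite /m1 /m2; ring.
    by rewrite hd dd mulr1 => ->; ring.
Qed.


Definition condab (x0 x1 x2 : R) :=
  (1 < x0 + x1 /\ 1 < x1 + x2 /\ 1 < x2 + x0) \/ (x0 + x1 < 1 /\ x1 + x2 < 1 /\ x2 + x0 < 1).

Lemma core (x0 x1 x2 m0 m1 m2 : R) : 0 < x0 < 1 -> 0 < x1 < 1 -> 0 < x2 < 1 ->
  isZ m1 -> isZ m2 -> m0 + m1 + m2 = 1 -> condab x0 x1 x2 -> m0 <= -1 ->
  0 <= m1 * x1 + m2 * (1 - x2) -> 0 <= m2 * x2 + m0 * (1 - x0) ->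
  0 <= m0 * x0 + m1 * (1 - x1) -> False.
Proof.
move=> /andP [h0 h0'] /andP [h1 h1'] /andP [h2 h2'] z1 z2 hs hc hm0 l0 l1 l2.
case: (isZ_cases _ z1) => [c1|[c1|c1]].
- have : m0 * x0 <= - x0 by nra.
  have : m1 * (1 - x1) <= - (1 - x1) by nra.
  lra.
- rewrite c1 in l2; nra.
case: (isZ_cases _ z2) => [c2|[c2|c2]].
- have : m2 * x2 <= - x2 by nra.
  have : m0 * (1 - x0) <= - (1 - x0) by nra.
  lra.
- rewrite c2 in l1; nra.
case: hc => [[a01 [a12 a20]]|[b01 [b12 b20]]].
- have : m1 * (1 - x1) <= - m0 * (1 - x1) by nra.
  have : m0 * (x0 + x1 - 1) < 0 by nra.
  nra.
- have : m2 * x2 <= - m0 * x2 by nra.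
  have : m0 * (1 - x0 - x2) < 0 by nra.
  nra.
Qed.

Lemma condab_rot x0 x1 x2 : condab x0 x1 x2 -> condab x1 x2 x0.
Proof. by rewrite /condab; case=> [[? [? ?]]|[? [? ?]]]; [left|right]; split; lra. Qed.

Lemma mu_unit (x0 x1 x2 m0 m1 m2 : R) : 0 < x0 < 1 -> 0 < x1 < 1 -> 0 < x2 < 1 ->
  isZ m0 -> isZ m1 -> isZ m2 -> m0 + m1 + m2 = 1 -> condab x0 x1 x2 ->
  0 <= m1 * x1 + m2 * (1 - x2) -> 0 <= m2 * x2 + m0 * (1 - x0) ->
  0 <= m0 * x0 + m1 * (1 - x1) ->
  [/\ m0 = 1, m1 = 0 & m2 = 0] \/ [/\ m0 = 0, m1 = 1 & m2 = 0] \/ [/\ m0 = 0, m1 = 0 & m2 = 1].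
Proof.
move=> hx0 hx1 hx2 z0 z1 z2 hs hc l0 l1 l2.
case: (isZ_cases _ z0) => [c0|c0].
  by case: (@core x0 x1 x2 m0 m1 m2 hx0 hx1 hx2 z1 z2 hs hc c0 l0 l1 l2).
case: (isZ_cases _ z1) => [c1|c1].
  have hc' := @condab_rot _ _ _ hc.
  by case: (@core x1 x2 x0 m1 m2 m0 hx1 hx2 hx0 z2 z0 (_ : m1 + m2 + m0 = 1) hc' c1 l1 l2 l0); lra.
case: (isZ_cases _ z2) => [c2|c2].
  have hc' := @condab_rot _ _ _ (@condab_rot _ _ _ hc).
  by case: (@core x2 x0 x1 m2 m0 m1 hx2 hx0 hx1 z0 z1 (_ : m2 + m0 + m1 = 1) hc' c2 l2 l0 l1); lra.
case: c0 => [e0|g0]; case: c1 => [e1|g1]; case: c2 => [e2|g2]; try lra.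
- by right; right; split => //; lra.
- by right; left; split => //; lra.
- by left; split => //; lra.
Qed.


Definition DD (x0 x1 x2 : R) := x0 * x1 * x2 + (1 - x0) * (1 - x1) * (1 - x2).

Lemma DD_gt0 x0 x1 x2 : 0 < x0 < 1 -> 0 < x1 < 1 -> 0 < x2 < 1 -> 0 < DD x0 x1 x2.
Proof.
move=> /andP [? ?] /andP [? ?] /andP [? ?]; rewrite /DD.
have p1 : 0 < x0 * x1 * x2 by rewrite !mulr_gt0.
have p2 : 0 < (1 - x0) * (1 - x1) * (1 - x2) by rewrite !mulr_gt0 // subr_gt0.
lra.
Qed.

Lemma width_ids (x0 x1 x2 g0 g1 g2 a b : R) :
  a = ((1 - x1) * g2 + x1 * g0) - ((1 - x0) * g1 + x0 * g2) ->
  b = ((1 - x2) * g0 + x2 * g1) - ((1 - x0) * g1 + x0 * g2) ->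
  [/\ DD x0 x1 x2 * (g0 - g1) = x0 * a - (x0 + x1 - 1) * b,
      DD x0 x1 x2 * (g0 - g2) = (x0 + x2 - 1) * a + (1 - x0) * b &
      DD x0 x1 x2 * (g2 - g1) = (1 - x2) * a - x1 * b].
Proof. by move=> -> ->; rewrite /DD; split; ring. Qed.

Lemma width_lb (x0 x1 x2 g0 g1 g2 a b W : R) :
  0 < x0 < 1 -> 0 < x1 < 1 -> 0 < x2 < 1 ->
  1 < x0 + x1 -> 1 < x1 + x2 -> 1 < x2 + x0 ->
  isZ a -> isZ b -> ~ (a = 0 /\ b = 0) ->
  a = ((1 - x1) * g2 + x1 * g0) - ((1 - x0) * g1 + x0 * g2) ->
  b = ((1 - x2) * g0 + x2 * g1) - ((1 - x0) * g1 + x0 * g2) ->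
  g0 - g1 <= W -> g1 - g0 <= W -> g0 - g2 <= W -> g2 - g0 <= W ->
  g1 - g2 <= W -> g2 - g1 <= W ->
  x0 <= DD x0 x1 x2 * W \/ x1 <= DD x0 x1 x2 * W \/ x2 <= DD x0 x1 x2 * W.
Proof.
move=> hx0 hx1 hx2 a01 a12 a20 za zb nab ha hb w1 w2 w3 w4 w5 w6.
have D0 := @DD_gt0 _ _ _ hx0 hx1 hx2.
move: hx0 hx1 hx2 => /andP [? ?] /andP [? ?] /andP [? ?].
have [e1 e2 e3] := @width_ids _ _ _ _ _ _ _ _ ha hb.
set D := DD x0 x1 x2 in D0 e1 e2 e3 *.
have k1 : D * (g0 - g1) <= D * W by rewrite ler_pM2l.
have k2 : D * (g1 - g0) <= D * W by rewrite ler_pM2l.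
have k3 : D * (g0 - g2) <= D * W by rewrite ler_pM2l.
have k4 : D * (g2 - g0) <= D * W by rewrite ler_pM2l.
have k5 : D * (g1 - g2) <= D * W by rewrite ler_pM2l.
have k6 : D * (g2 - g1) <= D * W by rewrite ler_pM2l.
have e1' : D * (g1 - g0) = - (x0 * a - (x0 + x1 - 1) * b) by rewrite -e1; ring.
have e2' : D * (g2 - g0) = - ((x0 + x2 - 1) * a + (1 - x0) * b) by rewrite -e2; ring.
have e3' : D * (g1 - g2) = - ((1 - x2) * a - x1 * b) by rewrite -e3; ring.
rewrite e1 in k1; rewrite e1' in k2; rewrite e2 in k3; rewrite e2' in k4;
  rewrite e3' in k5; rewrite e3 in k6.
case: (isZ_cases _ za) => [ca|[ca|ca]]; case: (isZ_cases _ zb) => [cb|[cb|cb]].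
- right; right; nra.
- left; rewrite cb in k2; nra.
- right; left; nra.
- right; left; rewrite ca in k5; nra.
- by case: nab.
- right; left; rewrite ca in k6; nra.
- right; left; nra.
- left; rewrite cb in k1; nra.
- right; right; nra.
Qed.

Lemma width_att (x0 x1 x2 g0 g1 g2 a b : R) :
  0 < x0 < 1 -> 0 < x1 < 1 -> 0 < x2 < 1 ->
  1 < x0 + x1 -> 1 < x1 + x2 -> 1 < x2 + x0 ->
  a = ((1 - x1) * g2 + x1 * g0) - ((1 - x0) * g1 + x0 * g2) ->
  b = ((1 - x2) * g0 + x2 * g1) - ((1 - x0) * g1 + x0 * g2) ->
  forall K, ((a = 1 /\ b = 0 /\ K = x0) \/ (a = 0 /\ b = 1 /\ K = x1) \/ (a = 1 /\ b = 1 /\ K = x2)) ->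
  DD x0 x1 x2 * (g0 - g1) <= K /\ DD x0 x1 x2 * (g1 - g0) <= K /\ DD x0 x1 x2 * (g0 - g2) <= K /\
      DD x0 x1 x2 * (g2 - g0) <= K /\ DD x0 x1 x2 * (g1 - g2) <= K /\ DD x0 x1 x2 * (g2 - g1) <= K.
Proof.
move=> hx0 hx1 hx2 a01 a12 a20 ha hb K hK.
move: hx0 hx1 hx2 => /andP [? ?] /andP [? ?] /andP [? ?].
have [e1 e2 e3] := @width_ids _ _ _ _ _ _ _ _ ha hb.
set D := DD x0 x1 x2 in e1 e2 e3 *.
have e1' : D * (g1 - g0) = - (x0 * a - (x0 + x1 - 1) * b) by rewrite -e1; ring.
have e2' : D * (g2 - g0) = - ((x0 + x2 - 1) * a + (1 - x0) * b) by rewrite -e2; ring.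
have e3' : D * (g1 - g2) = - ((1 - x2) * a - x1 * b) by rewrite -e3; ring.
rewrite e1 e1' e2 e2' e3 e3'.
by case: hK => [[-> [-> ->]]|[[-> [-> ->]]|[-> [-> ->]]]]; repeat split; lra.
Qed.

Lemma max3 (g0 g1 g2 : R) : exists2 M, (M = g0 \/ M = g1 \/ M = g2) & [/\ g0 <= M, g1 <= M & g2 <= M].
Proof.
case: (leP g0 g1) => ?; case: (leP g1 g2) => ?; case: (leP g0 g2) => ?;
first [ by exists g0; [left | split; lra]
      | by exists g1; [right; left | split; lra]
      | by exists g2; [right; right | split; lra]].
Qed.

Lemma min3 (g0 g1 g2 : R) : exists2 M, (M = g0 \/ M = g1 \/ M = g2) & [/\ M <= g0, M <= g1 & M <= g2].
Proof.
case: (leP g0 g1) => ?; case: (leP g1 g2) => ?; case: (leP g0 g2) => ?;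
first [ by exists g0; [left | split; lra]
      | by exists g1; [right; left | split; lra]
      | by exists g2; [right; right | split; lra]].
Qed.


Lemma bound3 (x y z : R) : 0 < x < 1 -> 0 < y < 1 -> 0 < z < 1 ->
  x <= y -> x <= z -> 1 < x + y -> 1 < x + z -> 1 < y + z ->
  x / DD x y z <= 1 + 2 / Num.sqrt 3 /\
  (x / DD x y z = 1 + 2 / Num.sqrt 3 <-> [/\ x = 1 / Num.sqrt 3, y = 1 / Num.sqrt 3 & z = 1 / Num.sqrt 3]).
Proof.
move=> hx hy hz xy xz sxy sxz syz.
have D0 := @DD_gt0 _ _ _ hx hy hz.
move: hx hy hz => /andP [x0 x1] /andP [y0 y1] /andP [z0 z1].
have s0 : 0 < Num.sqrt 3 :> R by rewrite sqrtr_gt0.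
have s2 : Num.sqrt 3 * Num.sqrt 3 = 3 :> R by rewrite -expr2 sqr_sqrtr.
set s := Num.sqrt 3 in s0 s2 *.
have -> : 2 / s = 2 * (1 / s) by rewrite mulrA mulr1.
set t := 1 / s.
have t0 : 0 < t by rewrite /t divr_gt0.
have t2 : 3 * (t * t) = 1 by rewrite /t -{1}s2; field; rewrite gt_eqF.
set c := 1 + 2 * t.
have th : 1 / 2 < t by nra.
have c2 : 2 < c by rewrite /c; lra.
set D := DD x y z in D0 *.
set q := 3 * x ^+ 2 - 3 * x + 1.
have Dgt : x * (1 - x) < D.
  rewrite /D /DD.
  have : 0 < (y - (1 - x)) * (x + z - 1) by apply: mulr_gt0; lra.
  nra.
have Eq : c * q - x = 3 * c * (x - t) ^+ 2.
  have -> : c * q - x = 3 * c * (x - t) ^+ 2 + (1 - 3 * (t * t)) * (c - 4 * x)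
    by rewrite /c /q; ring.
  by rewrite t2 subrr mul0r addr0.
have Dq : x >= 1 / 2 -> D - q = (y - x) * (x + z - 1) + (z - x) * (2 * x - 1).
  by move=> _; rewrite /D /DD /q; ring.
have sq0 : 0 <= (x - t) ^+ 2 by apply: sqr_ge0.
have key : x <= c * D.
  case: (ltP x (1 / 2)) => hx2.
  - have : 1 < c * (1 - x) by nra.
    nra.
  - have h1 : 0 <= (y - x) * (x + z - 1) by apply: mulr_ge0; lra.
    have h2 : 0 <= (z - x) * (2 * x - 1) by apply: mulr_ge0; lra.
    have := Dq hx2.
    nra.
have divE : (x / D <= c) = (x <= c * D) by rewrite ler_pdivrMr // mulrC.
have divE' : (x / D = c) <-> (x = c * D).
  split => h; [by rewrite -h divfK // gt_eqF | by rewrite h mulfK // gt_eqF].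
split; first by rewrite divE.
rewrite divE'; split.
- move=> hE.
  case: (ltP x (1 / 2)) => hx2.
    have : 1 < c * (1 - x) by nra.
    nra.
  have h1 : 0 <= (y - x) * (x + z - 1) by apply: mulr_ge0; lra.
  have h2 : 0 <= (z - x) * (2 * x - 1) by apply: mulr_ge0; lra.
  have := Dq hx2 => hDq.
  have hsum : c * (D - q) + 3 * c * (x - t) ^+ 2 = 0 by rewrite -Eq; lra.
  have hA : 0 <= c * (D - q) by apply: mulr_ge0; lra.
  have hB : 0 <= 3 * c * (x - t) ^+ 2 by apply: mulr_ge0; [apply: mulr_ge0|]; lra.
  have hB0 : (x - t) ^+ 2 = 0.
    have : 3 * c * (x - t) ^+ 2 = 0 by lra.
    move/eqP; rewrite mulf_eq0 => /orP [|/eqP //]; rewrite mulf_eq0; case/orP => /eqP; lra.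
  have ext : x = t by apply/eqP; rewrite -subr_eq0 -sqrf_eq0; apply/eqP.
  have hDq0 : D - q = 0.
    have : c * (D - q) = 0 by lra.
    by move/eqP; rewrite mulf_eq0 => /orP [/eqP|/eqP //]; lra.
  have hy' : (y - x) * (x + z - 1) = 0 by lra.
  have hz' : (z - x) * (2 * x - 1) = 0 by lra.
  move: hy' => /eqP; rewrite mulf_eq0 => /orP [/eqP hy'|/eqP]; last by lra.
  move: hz' => /eqP; rewrite mulf_eq0 => /orP [/eqP hz'|/eqP]; last by lra.
  split; lra.
- case=> ex ey ez.
  have hDq : D - q = 0 by rewrite Dq; [rewrite ex ey ez; ring | lra].
  have : c * q - x = 0 by rewrite Eq ex subrr expr0n /= mulr0.
  have -> : D = q by lra.
  lra.
Qed.


Lemma widthQ (q0 q1 q2 u : pt) :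
  let W := width_dir (conv3 q0 q1 q2) u in
  let g0 := dot u q0 in let g1 := dot u q1 in let g2 := dot u q2 in
  (forall gi gj, (gi = g0 \/ gi = g1 \/ gi = g2) -> (gj = g0 \/ gj = g1 \/ gj = g2) -> gi - gj <= W) /\
  (forall K, g0 - g1 <= K -> g1 - g0 <= K -> g0 - g2 <= K -> g2 - g0 <= K ->
     g1 - g2 <= K -> g2 - g1 <= K -> W <= K).
Proof.
move=> W g0 g1 g2.
set S := [set dot u x | x in conv3 q0 q1 q2].
have inS : forall gi, (gi = g0 \/ gi = g1 \/ gi = g2) -> S gi.
  move=> gi [->|[->|->]].
  - exists q0 => //; exists 1, 0, 0; split; [lra|lra|lra|lra|apply: pairP => /=; ring].
  - exists q1 => //; exists 0, 1, 0; split; [lra|lra|lra|lra|apply: pairP => /=; ring].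
  - exists q2 => //; exists 0, 0, 1; split; [lra|lra|lra|lra|apply: pairP => /=; ring].
have elt : forall s, S s -> exists l0 l1 l2, [/\ 0 <= l0, 0 <= l1, 0 <= l2, l0 + l1 + l2 = 1 &
    s = l0 * g0 + l1 * g1 + l2 * g2].
  move=> s [x [l0 [l1 [l2 [h0 h1 h2 hs ->]]]] <-].
  by exists l0, l1, l2; split => //; rewrite /g0 /g1 /g2 /dot /=; ring.
have ub : forall M, g0 <= M -> g1 <= M -> g2 <= M -> ubound S M.
  move=> M m0 m1 m2 s /elt [l0 [l1 [l2 [h0 h1 h2 hs ->]]]].
  have := ler_wpM2l h0 m0; have := ler_wpM2l h1 m1; have := ler_wpM2l h2 m2.
  have : l0 * M + l1 * M + l2 * M = M by rewrite -!mulrDl hs mul1r.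
  lra.
have lb : forall M, M <= g0 -> M <= g1 -> M <= g2 -> lbound S M.
  move=> M m0 m1 m2 s /elt [l0 [l1 [l2 [h0 h1 h2 hs ->]]]].
  have := ler_wpM2l h0 m0; have := ler_wpM2l h1 m1; have := ler_wpM2l h2 m2.
  have : l0 * M + l1 * M + l2 * M = M by rewrite -!mulrDl hs mul1r.
  lra.
have ne : S !=set0 by exists g0; apply: inS; left.
have [Mx hMx [Mx0 Mx1 Mx2]] := max3 g0 g1 g2.
have [mn hmn [mn0 mn1 mn2]] := min3 g0 g1 g2.
have hsup : has_sup S by split => //; exists Mx; apply: ub.
have hinf : has_lbound S by exists mn; apply: lb.
split.
- move=> gi gj hi hj.
  have a1 : gi <= sup S by apply: sup_upper_bound => //; apply: inS.
  have a2 : inf S <= gj by apply: ge_inf => //; apply: inS.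
  rewrite /W /width_dir -/S; lra.
- move=> K k1 k2 k3 k4 k5 k6.
  have a1 : sup S <= Mx by apply: ge_sup => //; apply: ub.
  have a2 : mn <= inf S by apply: lb_le_inf => //; apply: lb.
  rewrite /W /width_dir -/S.
  case: hMx => [e|[e|e]]; case: hmn => [e'|[e'|e']]; lra.
Qed.


Lemma LP (q0 q1 q2 : pt) x0 x1 x2 (a0 b0 a1 b1 a2 b2 : R) : cross q0 q1 q2 != 0 ->
  (a0, b0) = comb x0 q1 q2 -> (a1, b1) = comb x1 q2 q0 -> (a2, b2) = comb x2 q0 q1 ->
  forall z m0 m1 m2, m0 + m1 + m2 = 1 ->
  z = (m0 * a0 + m1 * a1 + m2 * a2, m0 * b0 + m1 * b1 + m2 * b2) ->
  [/\ bary q0 q1 q2 z = m1 * x1 + m2 * (1 - x2),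
      bary q1 q2 q0 z = m2 * x2 + m0 * (1 - x0) &
      bary q2 q0 q1 z = m0 * x0 + m1 * (1 - x1)].
Proof.
move=> h [ea0 eb0] [ea1 eb1] [ea2 eb2] z m0 m1 m2 hs ->.
have hb : cross q1 q2 q0 != 0 by rewrite (cross_rot q0 q1 q2).
have hc : cross q2 q0 q1 != 0 by rewrite (cross_rot q1 q2 q0) (cross_rot q0 q1 q2).
rewrite ea0 eb0 ea1 eb1 ea2 eb2.
split.
- apply: (@bary_comb _ _ _ _ _ (m2 * x2 + m0 * (1 - x0)) (m0 * x0 + m1 * (1 - x1))) => //.
    by lra.
  apply: pairP => /=; ring.
- apply: (@bary_comb _ _ _ _ _ (m0 * x0 + m1 * (1 - x1)) (m1 * x1 + m2 * (1 - x2))) => //.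
    by lra.
  apply: pairP => /=; ring.
- apply: (@bary_comb _ _ _ _ _ (m1 * x1 + m2 * (1 - x2)) (m2 * x2 + m0 * (1 - x0))) => //.
    by lra.
  apply: pairP => /=; ring.
Qed.

End Geo.

Section Geo2.
Context {R : realType}.

Lemma case_split (x0 x1 x2 : R) :
  (0 <= x0 + x2 - 1 -> x0 + x1 <= 1 -> False) ->
  (0 <= x0 + x1 - 1 -> x1 + x2 <= 1 -> False) ->
  (0 <= x1 + x2 - 1 -> x0 + x2 <= 1 -> False) ->
  [/\ 1 < x0 + x1, 1 < x0 + x2 & 1 < x1 + x2] \/ [/\ x0 + x1 < 1, x0 + x2 < 1 & x1 + x2 < 1].
Proof.
move=> hA hB hC.
case: (ltrgtP (x0 + x1) 1) => h01.
- case: (leP 1 (x0 + x2)) => h02; first by case: hA; lra.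
  case: (leP 1 (x1 + x2)) => h12; first by case: hC; lra.
  by right; split.
- case: (leP (x1 + x2) 1) => h12; first by case: hB; lra.
  case: (leP (x0 + x2) 1) => h02; first by case: hC; lra.
  by left; split.
- case: (leP (x1 + x2) 1) => h12; first by case: hB; lra.
  case: (leP (x0 + x2) 1) => h02; first by case: hC; lra.
  by case: hA; lra.
Qed.


Lemma min3P (x0 x1 x2 : R) :
  [/\ Num.min x0 (Num.min x1 x2) <= x0, Num.min x0 (Num.min x1 x2) <= x1,
      Num.min x0 (Num.min x1 x2) <= x2 &
      (Num.min x0 (Num.min x1 x2) = x0 /\ x0 <= x1 /\ x0 <= x2) \/
      (Num.min x0 (Num.min x1 x2) = x1 /\ x1 <= x0 /\ x1 <= x2) \/
      (Num.min x0 (Num.min x1 x2) = x2 /\ x2 <= x0 /\ x2 <= x1)].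
Proof.
rewrite /Order.min.
case: (ltP x1 x2) => h12; case: (ltP x0 x1) => h01; case: (ltP x0 x2) => h02;
  split; try lra; first [left; split; lra | right; left; split; lra | right; right; split; lra].
Qed.

Lemma bound_all (x0 x1 x2 : R) : 0 < x0 < 1 -> 0 < x1 < 1 -> 0 < x2 < 1 ->
  1 < x0 + x1 -> 1 < x0 + x2 -> 1 < x1 + x2 ->
  Num.min x0 (Num.min x1 x2) / DD x0 x1 x2 <= 1 + 2 / Num.sqrt 3 /\
  (Num.min x0 (Num.min x1 x2) / DD x0 x1 x2 = 1 + 2 / Num.sqrt 3 <->
    [/\ x0 = 1 / Num.sqrt 3, x1 = 1 / Num.sqrt 3 & x2 = 1 / Num.sqrt 3]).
Proof.
move=> hx0 hx1 hx2 s01 s02 s12.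
have [_ _ _ [[-> [h1 h2]]|[[-> [h1 h2]]|[-> [h1 h2]]]]] := min3P x0 x1 x2.
- exact: bound3.
- have -> : DD x0 x1 x2 = DD x1 x2 x0 by rewrite /DD; ring.
  have [H1 H2] := @bound3 _ x1 x2 x0 hx1 hx2 hx0 h2 h1 ltac:(lra) ltac:(lra) ltac:(lra).
  split => //; rewrite H2; split; case=> ? ? ?; by split.
- have -> : DD x0 x1 x2 = DD x2 x0 x1 by rewrite /DD; ring.
  have [H1 H2] := @bound3 _ x2 x0 x1 hx2 hx0 hx1 h1 h2 ltac:(lra) ltac:(lra) ltac:(lra).
  split => //; rewrite H2; split; case=> ? ? ?; by split.
Qed.

End Geo2.

Section Main.
Variable R : realType.
Local Notation pt := (R * R)%type.
Ltac zt2 := repeat first [assumption | apply: isZ_int | apply: isZ1 | apply: isZ0 |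
  apply: isZ_add | apply: isZ_opp | apply: isZ_mul].

Lemma main (p0 p1 p2 q0 q1 q2 : R * R) (x0 x1 x2 : R) :
  lattice_point p0 -> lattice_point p1 -> lattice_point p2 ->
  nondeg_triangle p0 p1 p2 ->
  (forall z, lattice_point z -> conv3 p0 p1 p2 z -> z = p0 \/ z = p1 \/ z = p2) ->
  nondeg_triangle q0 q1 q2 ->
  p0 = comb x0 q1 q2 -> p1 = comb x1 q2 q0 -> p2 = comb x2 q0 q1 ->
  0 < x0 < 1 -> 0 < x1 < 1 -> 0 < x2 < 1 ->
  let Q := conv3 q0 q1 q2 in
  let cond_a := [/\ x0 + x1 > 1, x0 + x2 > 1 & x1 + x2 > 1] in
  let cond_b := [/\ x0 + x1 < 1, x0 + x2 < 1 & x1 + x2 < 1] in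
  [/\ (mlf_triangle_type3 q0 q1 q2 <-> cond_a \/ cond_b),
      (cond_a -> lattice_width Q =
         Num.min x0 (Num.min x1 x2) /
           (x0 * x1 * x2 + (1 - x0) * (1 - x1) * (1 - x2))) &
      (cond_a -> lattice_width Q <= 1 + 2 / Num.sqrt 3 /\
         (lattice_width Q = 1 + 2 / Num.sqrt 3 <->
            [/\ x0 = 1 / Num.sqrt 3, x1 = 1 / Num.sqrt 3 & x2 = 1 / Num.sqrt 3]))].
Proof.
move: p0 p1 p2 => [a0 b0] [a1 b1] [a2 b2].
move=> /latticeP [za0 zb0] /latticeP [za1 zb1] /latticeP [za2 zb2] ndP hE ndQ e0 e1 e2 hx0 hx1 hx2.
move=> Q cond_a cond_b.
have hQ : cross q0 q1 q2 != 0 := ndQ.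
have hQb : cross q1 q2 q0 != 0 by rewrite (cross_rot q0 q1 q2).
have hQc : cross q2 q0 q1 != 0 by rewrite (cross_rot q1 q2 q0) (cross_rot q0 q1 q2).
have hP : cross (a0, b0) (a1, b1) (a2, b2) != 0 := ndP.
have LPz := @LP _ q0 q1 q2 x0 x1 x2 a0 b0 a1 b1 a2 b2 hQ e0 e1 e2.
have [l00 l01 l02] := LPz (a0, b0) 1 0 0 ltac:(lra) ltac:(apply: pairP => /=; ring).
have [l10 l11 l12] := LPz (a1, b1) 0 1 0 ltac:(lra) ltac:(apply: pairP => /=; ring).
have [l20 l21 l22] := LPz (a2, b2) 0 0 1 ltac:(lra) ltac:(apply: pairP => /=; ring).
have lat0 : lattice_point (a0, b0) by apply/latticeP.
have lat1 : lattice_point (a1, b1) by apply/latticeP.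
have lat2 : lattice_point (a2, b2) by apply/latticeP.
move: (hx0) (hx1) (hx2) => /andP [x00 x01] /andP [x10 x11] /andP [x20 x21].
have unim := @unimod _ a0 b0 a1 b1 a2 b2 za0 zb0 za1 zb1 za2 zb2 hP hE.
have dec := @decomp _ a0 b0 a1 b1 a2 b2 _ erefl unim za0 zb0 za1 zb1 za2 zb2.
have QP : forall z, Q z <-> [/\ 0 <= bary q0 q1 q2 z, 0 <= bary q1 q2 q0 z & 0 <= bary q2 q0 q1 z].
  by move=> z; rewrite /Q; apply: conv3P.
have Bnd : condab x0 x1 x2 -> forall z, lattice_point z -> Q z ->
    z = (a0, b0) \/ z = (a1, b1) \/ z = (a2, b2).
  move=> hc z hz /QP [k0 k1 k2].
  have [m0 [m1 [m2 [zm0 zm1 zm2 hs ez]]]] := dec z hz.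
  have [y0 y1 y2] := LPz z m0 m1 m2 hs ez.
  rewrite y0 in k0; rewrite y1 in k1; rewrite y2 in k2.
  rewrite ez; case: (@mu_unit _ x0 x1 x2 m0 m1 m2 hx0 hx1 hx2 zm0 zm1 zm2 hs hc k0 k1 k2)
    => [[-> -> ->]|[[-> -> ->]|[-> -> ->]]].
  - by left; apply: pairP => /=; ring.
  - by right; left; apply: pairP => /=; ring.
  - by right; right; apply: pairP => /=; ring.
have LW : cond_a -> lattice_width Q = Num.min x0 (Num.min x1 x2) / DD x0 x1 x2.
  move=> [ha01 ha02 ha12].
  have D0 := @DD_gt0 _ _ _ _ hx0 hx1 hx2.
  set mn := Num.min x0 (Num.min x1 x2).
  have [mn0 mn1 mn2 mnc] := min3P x0 x1 x2.
  rewrite -/mn in mn0 mn1 mn2 mnc.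
  have dp0 : forall u, dot u (a0, b0) = (1 - x0) * dot u q1 + x0 * dot u q2.
    by move=> u; rewrite e0 (@aff_comb _ (dot u) x0 q1 q2 (aff_dot u)).
  have dp1 : forall u, dot u (a1, b1) = (1 - x1) * dot u q2 + x1 * dot u q0.
    by move=> u; rewrite e1 (@aff_comb _ (dot u) x1 q2 q0 (aff_dot u)).
  have dp2 : forall u, dot u (a2, b2) = (1 - x2) * dot u q0 + x2 * dot u q1.
    by move=> u; rewrite e2 (@aff_comb _ (dot u) x2 q0 q1 (aff_dot u)).
  have LB : forall u, lattice_point u -> u <> (0, 0) -> mn / DD x0 x1 x2 <= width_dir Q u.
    move=> [u1 u2] /latticeP [/= zu1 zu2] hu0.
    have [W1 _] := @widthQ _ q0 q1 q2 (u1, u2).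
    have za : isZ (dot (u1, u2) (a1, b1) - dot (u1, u2) (a0, b0)) by rewrite /dot /=; zt2.
    have zb : isZ (dot (u1, u2) (a2, b2) - dot (u1, u2) (a0, b0)) by rewrite /dot /=; zt2.
    have nab : ~ (dot (u1, u2) (a1, b1) - dot (u1, u2) (a0, b0) = 0 /\
                  dot (u1, u2) (a2, b2) - dot (u1, u2) (a0, b0) = 0).
      move=> [h1 h2]; apply: hu0.
      have [-> ->] : u1 = 0 /\ u2 = 0.
        apply: (@indep _ (a1 - a0) (a2 - a0) (b1 - b0) (b2 - b0)).
        - by move: h1; rewrite /dot /= => h1; rewrite -h1; ring.
        - by move: h2; rewrite /dot /= => h2; rewrite -h2; ring.
        - by move: hP; rewrite /cross /= [(b1 - b0) * _]mulrC.
      by [].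
    have [k|[k|k]] := @width_lb _ x0 x1 x2 (dot (u1, u2) q0) (dot (u1, u2) q1) (dot (u1, u2) q2)
      (dot (u1, u2) (a1, b1) - dot (u1, u2) (a0, b0)) (dot (u1, u2) (a2, b2) - dot (u1, u2) (a0, b0))
      (width_dir Q (u1, u2))
      hx0 hx1 hx2 ha01 ha12 ltac:(clear -ha02; lra) za zb nab
      ltac:(by rewrite dp0 dp1) ltac:(by rewrite dp0 dp2)
      (W1 _ _ (or_introl erefl) (or_intror (or_introl erefl)))
      (W1 _ _ (or_intror (or_introl erefl)) (or_introl erefl))
      (W1 _ _ (or_introl erefl) (or_intror (or_intror erefl)))
      (W1 _ _ (or_intror (or_intror erefl)) (or_introl erefl))
      (W1 _ _ (or_intror (or_introl erefl)) (or_intror (or_intror erefl)))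
      (W1 _ _ (or_intror (or_intror erefl)) (or_intror (or_introl erefl)));
    rewrite ler_pdivrMr // mulrC; exact: le_trans k.
  have [d hd hd1] : exists2 d, cross (a0, b0) (a1, b1) (a2, b2) = d & (d = 1 \/ d = -1).
    by exists (cross (a0, b0) (a1, b1) (a2, b2)).
  have zd : isZ d by case: hd1 => ->; zt2.
  have dd : d * d = 1 by case: hd1 => ->; ring.
  move: hd; rewrite /cross /= => hd.
  have ATT : forall u, lattice_point u -> forall K,
      ((dot u (a1, b1) - dot u (a0, b0) = 1 /\ dot u (a2, b2) - dot u (a0, b0) = 0 /\ K = x0) \/
       (dot u (a1, b1) - dot u (a0, b0) = 0 /\ dot u (a2, b2) - dot u (a0, b0) = 1 /\ K = x1) \/
       (dot u (a1, b1) - dot u (a0, b0) = 1 /\ dot u (a2, b2) - dot u (a0, b0) = 1 /\ K = x2)) ->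
      [set width_dir Q u | u in [set u | lattice_point u /\ u <> (0, 0)]] (width_dir Q u) /\
      width_dir Q u <= K / DD x0 x1 x2.
    move=> u hu K hK; split.
      exists u => //; split => // hu0; move: hK; rewrite hu0 /dot /=.
      rewrite !mul0r !addr0 subrr => hK.
      have h01 : (0 : R) <> 1 by move/eqP; rewrite eq_sym oner_eq0.
      by case: hK => [[h _]|[[_ [h _]]|[h _]]]; apply: h01.
    have [_ W2] := @widthQ _ q0 q1 q2 u.
    have [k1 [k2 [k3 [k4 [k5 k6]]]]] := @width_att _ x0 x1 x2 (dot u q0) (dot u q1) (dot u q2)
      (dot u (a1, b1) - dot u (a0, b0)) (dot u (a2, b2) - dot u (a0, b0))
      hx0 hx1 hx2 ha01 ha12 ltac:(clear -ha02; lra)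
      ltac:(by rewrite dp0 dp1) ltac:(by rewrite dp0 dp2) K hK.
    by apply: W2; rewrite ler_pdivlMr // mulrC.
  pose uA := (d * (b2 - b0), - (d * (a2 - a0))).
  pose uB := (- (d * (b1 - b0)), d * (a1 - a0)).
  have latA : lattice_point uA by apply/latticeP; split; rewrite /uA /=; zt2.
  have latB : lattice_point uB by apply/latticeP; split; rewrite /uB /=; zt2.
  have latC : lattice_point (uA.1 + uB.1, uA.2 + uB.2).
    by apply/latticeP; split; rewrite /uA /uB /=; zt2.
  have hA1 : dot uA (a1, b1) - dot uA (a0, b0) = 1.
    by rewrite -dd -{2}hd /uA /dot /=; ring.
  have hA2 : dot uA (a2, b2) - dot uA (a0, b0) = 0 by rewrite /uA /dot /=; ring.
  have hB1 : dot uB (a1, b1) - dot uB (a0, b0) = 0 by rewrite /uB /dot /=; ring.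
  have hB2 : dot uB (a2, b2) - dot uB (a0, b0) = 1.
    by rewrite -dd -{2}hd /uB /dot /=; ring.
  have hC1 : dot (uA.1 + uB.1, uA.2 + uB.2) (a1, b1) - dot (uA.1 + uB.1, uA.2 + uB.2) (a0, b0) = 1.
    by rewrite -hA1 -[X in _ = X]addr0 -hB1 /dot /=; ring.
  have hC2 : dot (uA.1 + uB.1, uA.2 + uB.2) (a2, b2) - dot (uA.1 + uB.1, uA.2 + uB.2) (a0, b0) = 1.
    by rewrite -hB2 -[X in _ = X]add0r -{1}hA2 /dot /=; ring.
  have [u [Tu Wu]] : exists u, [set width_dir Q u | u in [set u | lattice_point u /\ u <> (0, 0)]]
      (width_dir Q u) /\ width_dir Q u <= mn / DD x0 x1 x2.
    case: mnc => [[-> _]|[[-> _]|[-> _]]].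
    - by exists uA; apply: ATT => //; left.
    - by exists uB; apply: ATT => //; right; left.
    - by exists (uA.1 + uB.1, uA.2 + uB.2); apply: ATT => //; right; right.
  rewrite /lattice_width.
  set T := [set width_dir Q u | u in [set u | lattice_point u /\ u <> (0, 0)]] in Tu *.
  have lbT : lbound T (mn / DD x0 x1 x2).
    by move=> t [v [hv hv0] <-]; apply: LB.
  apply/eqP; rewrite eq_le; apply/andP; split.
  - apply: le_trans Wu; apply: ge_inf => //; by exists (mn / DD x0 x1 x2).
  - by apply: lb_le_inf => //; exists (width_dir Q u).
split.
- split.
  + move=> [_ [[hcc hlf] hmax] [z0 [z1 [z2 [[lz0 sz0] [lz1 sz1] [lz2 sz2] hT]]]]].
    case: sz0 => t0 /andP [t00 t01] ez0.
    case: sz1 => t1 /andP [t10 t11] ez1.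
    case: sz2 => t2 /andP [t20 t21] ez2.
    have w00 : bary q0 q1 q2 z0 = 0.
      by apply: (@bary_comb _ _ _ _ _ 0 (1 - t0) t0) => //; [ring | rewrite ez0 /comb; apply: pairP => /=; ring].
    have w01 : bary q1 q2 q0 z0 = 1 - t0.
      by apply: (@bary_comb _ _ _ _ _ (1 - t0) t0 0) => //; [ring | rewrite ez0 /comb; apply: pairP => /=; ring].
    have w02 : bary q2 q0 q1 z0 = t0.
      by apply: (@bary_comb _ _ _ _ _ t0 0 (1 - t0)) => //; [ring | rewrite ez0 /comb; apply: pairP => /=; ring].
    have w10 : bary q0 q1 q2 z1 = t1.
      by apply: (@bary_comb _ _ _ _ _ t1 0 (1 - t1)) => //; [ring | rewrite ez1 /comb; apply: pairP => /=; ring].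
    have w11 : bary q1 q2 q0 z1 = 0.
      by apply: (@bary_comb _ _ _ _ _ 0 (1 - t1) t1) => //; [ring | rewrite ez1 /comb; apply: pairP => /=; ring].
    have w12 : bary q2 q0 q1 z1 = 1 - t1.
      by apply: (@bary_comb _ _ _ _ _ (1 - t1) t1 0) => //; [ring | rewrite ez1 /comb; apply: pairP => /=; ring].
    have w20 : bary q0 q1 q2 z2 = 1 - t2.
      by apply: (@bary_comb _ _ _ _ _ (1 - t2) t2 0) => //; [ring | rewrite ez2 /comb; apply: pairP => /=; ring].
    have w21 : bary q1 q2 q0 z2 = t2.
      by apply: (@bary_comb _ _ _ _ _ t2 0 (1 - t2)) => //; [ring | rewrite ez2 /comb; apply: pairP => /=; ring].
    have w22 : bary q2 q0 q1 z2 = 0.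
      by apply: (@bary_comb _ _ _ _ _ 0 (1 - t2) t2) => //; [ring | rewrite ez2 /comb; apply: pairP => /=; ring].
    have AllZ : forall z, lattice_point z -> Q z -> z = z0 \/ z = z1 \/ z = z2.
      by move=> z hz Qz; apply: hT => //; apply: hlf.
    have Qp0 : Q (a0, b0) by apply/QP; rewrite l00 l01 l02; clear -x00 x01 x10 x11 x20 x21; split; lra.
    have Qp1 : Q (a1, b1) by apply/QP; rewrite l10 l11 l12; clear -x00 x01 x10 x11 x20 x21; split; lra.
    have Qp2 : Q (a2, b2) by apply/QP; rewrite l20 l21 l22; clear -x00 x01 x10 x11 x20 x21; split; lra.
    have E0 : (a0, b0) = z0.
      case: (AllZ _ lat0 Qp0) => [//|[e|e]]; rewrite e in l00 l01 l02; exfalso; clear -l00 l01 l02 w00 w01 w02 w10 w11 w12 w20 w21 w22 x00 x01 x10 x11 x20 x21 t00 t01 t10 t11 t20 t21; lra.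
    have E1 : (a1, b1) = z1.
      case: (AllZ _ lat1 Qp1) => [e|[//|e]]; rewrite e in l10 l11 l12; exfalso; clear -l10 l11 l12 w00 w01 w02 w10 w11 w12 w20 w21 w22 x00 x01 x10 x11 x20 x21 t00 t01 t10 t11 t20 t21; lra.
    have E2 : (a2, b2) = z2.
      case: (AllZ _ lat2 Qp2) => [e|[e|//]]; rewrite e in l20 l21 l22; exfalso; clear -l20 l21 l22 w00 w01 w02 w10 w11 w12 w20 w21 w22 x00 x01 x10 x11 x20 x21 t00 t01 t10 t11 t20 t21; lra.
    have AllP : forall z, lattice_point z -> Q z -> z = (a0, b0) \/ z = (a1, b1) \/ z = (a2, b2).
      by rewrite E0 E1 E2; exact: AllZ.
    have Xno : forall m0 m1 m2, isZ m0 -> isZ m1 -> isZ m2 -> m0 + m1 + m2 = 1 ->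
        0 <= m1 * x1 + m2 * (1 - x2) -> 0 <= m2 * x2 + m0 * (1 - x0) ->
        0 <= m0 * x0 + m1 * (1 - x1) ->
        ~ (m1 * x1 + m2 * (1 - x2) = 0 * x1 + 0 * (1 - x2) /\
           m2 * x2 + m0 * (1 - x0) = 0 * x2 + 1 * (1 - x0) /\
           m0 * x0 + m1 * (1 - x1) = 1 * x0 + 0 * (1 - x1)) ->
        ~ (m1 * x1 + m2 * (1 - x2) = 1 * x1 + 0 * (1 - x2) /\
           m2 * x2 + m0 * (1 - x0) = 0 * x2 + 0 * (1 - x0) /\
           m0 * x0 + m1 * (1 - x1) = 0 * x0 + 1 * (1 - x1)) ->
        ~ (m1 * x1 + m2 * (1 - x2) = 0 * x1 + 1 * (1 - x2) /\
           m2 * x2 + m0 * (1 - x0) = 1 * x2 + 0 * (1 - x0) /\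
           m0 * x0 + m1 * (1 - x1) = 0 * x0 + 0 * (1 - x1)) -> False.
      move=> m0 m1 m2 zm0 zm1 zm2 hs k0 k1 k2 n0 n1 n2.
      set X := (m0 * a0 + m1 * a1 + m2 * a2, m0 * b0 + m1 * b1 + m2 * b2).
      have [y0 y1 y2] := LPz X m0 m1 m2 hs erefl.
      have latX : lattice_point X by apply/latticeP; split; rewrite /X /=; zt2.
      have QX : Q X by apply/QP; rewrite y0 y1 y2.
      case: (AllP X latX QX) => [e|[e|e]]; rewrite e in y0 y1 y2.
      - by apply: n0; rewrite -y0 -y1 -y2 l00 l01 l02.
      - by apply: n1; rewrite -y0 -y1 -y2 l10 l11 l12.
      - by apply: n2; rewrite -y0 -y1 -y2 l20 l21 l22.
    have hA : 0 <= x0 + x2 - 1 -> x0 + x1 <= 1 -> False.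
      move=> h1 h2; apply: (Xno (-1) 1 1); try zt2; clear -h1 h2 x00 x01 x10 x11 x20 x21; try lra; move=> [? [? ?]]; lra.
    have hB : 0 <= x0 + x1 - 1 -> x1 + x2 <= 1 -> False.
      move=> h1 h2; apply: (Xno 1 (-1) 1); try zt2; clear -h1 h2 x00 x01 x10 x11 x20 x21; try lra; move=> [? [? ?]]; lra.
    have hC : 0 <= x1 + x2 - 1 -> x0 + x2 <= 1 -> False.
      move=> h1 h2; apply: (Xno 1 1 (-1)); try zt2; clear -h1 h2 x00 x01 x10 x11 x20 x21; try lra; move=> [? [? ?]]; lra.
    exact: case_split.
  + move=> hcd.
    have hc : condab x0 x1 x2.
      by rewrite /condab; case: hcd => [[h1 h2 h3]|[h1 h2 h3]]; [left|right];
        clear -h1 h2 h3; repeat split; lra.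
    have p00 : bary q0 q1 q2 (a0, b0) = 0 by rewrite l00; ring.
    have p01 : 0 < bary q1 q2 q0 (a0, b0) by rewrite l01; clear -x00 x01; lra.
    have p02 : 0 < bary q2 q0 q1 (a0, b0) by rewrite l02; clear -x00 x01; lra.
    have p10 : 0 < bary q0 q1 q2 (a1, b1) by rewrite l10; clear -x10 x11; lra.
    have p11 : bary q1 q2 q0 (a1, b1) = 0 by rewrite l11; ring.
    have p12 : 0 < bary q2 q0 q1 (a1, b1) by rewrite l12; clear -x10 x11; lra.
    have p20 : 0 < bary q0 q1 q2 (a2, b2) by rewrite l20; clear -x20 x21; lra.
    have p21 : 0 < bary q1 q2 q0 (a2, b2) by rewrite l21; clear -x20 x21; lra.
    have p22 : bary q2 q0 q1 (a2, b2) = 0 by rewrite l22; ring.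
    split => //.
    * split.
      - split; first exact: conv3_ccbody.
        move=> z hz hi.
        have [k0 k1 k2] := @conv3_int_pos _ q0 q1 q2 z hQ hi.
        have Qz : Q z by apply/QP; split; apply: ltW.
        case: (Bnd hc z hz Qz) => [ez|[ez|ez]]; rewrite ez in k0 k1 k2.
        + by move: k0; rewrite p00 ltxx.
        + by move: k1; rewrite p11 ltxx.
        + by move: k2; rewrite p22 ltxx.
      - move=> K' [[_ hK'conv _] hK'lf] hsub.
        apply/seteqP; split; last exact: hsub.
        move=> y hy; apply/QP; split; rewrite leNgt; apply/negP => hneg.
        + apply: (hK'lf _ lat0).
          exact: (@max_edge _ q0 q1 q2 (a0, b0) K' y hQ hK'conv hsub hy hneg p00 p01 p02).
        + apply: (hK'lf _ lat1).
          have sub' : conv3 q1 q2 q0 `<=` K'.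
            move=> w /(conv3P _ _ _ _ hQb) [u0 u1 u2]; apply: hsub; apply/QP; split => //.
          exact: (@max_edge _ q1 q2 q0 (a1, b1) K' y hQb hK'conv sub' hy hneg p11 p12 p10).
        + apply: (hK'lf _ lat2).
          have sub' : conv3 q2 q0 q1 `<=` K'.
            move=> w /(conv3P _ _ _ _ hQc) [u0 u1 u2]; apply: hsub; apply/QP; split => //.
          exact: (@max_edge _ q2 q0 q1 (a2, b2) K' y hQc hK'conv sub' hy hneg p22 p20 p21).
    * exists (a0, b0), (a1, b1), (a2, b2); split.
      - by split => //; exists x0.
      - by split => //; exists x1.
      - by split => //; exists x2.
      - by move=> z hz Qz _; exact: Bnd.
- exact: LW.
- move=> hca; rewrite (LW hca).
  case: hca => ha01 ha02 ha12.
  exact: (@bound_all _ x0 x1 x2 hx0 hx1 hx2 ha01 ha02 ha12).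
Qed.


End Main.

Theorem lemma13 (R : realType) (p0 p1 p2 q0 q1 q2 : R * R) (x0 x1 x2 : R) :
  lattice_point p0 -> lattice_point p1 -> lattice_point p2 ->
  nondeg_triangle p0 p1 p2 ->
  (forall z, lattice_point z -> conv3 p0 p1 p2 z -> z = p0 \/ z = p1 \/ z = p2) ->
  nondeg_triangle q0 q1 q2 ->
  p0 = comb x0 q1 q2 -> p1 = comb x1 q2 q0 -> p2 = comb x2 q0 q1 ->
  0 < x0 < 1 -> 0 < x1 < 1 -> 0 < x2 < 1 ->
  let Q := conv3 q0 q1 q2 in
  let cond_a := [/\ x0 + x1 > 1, x0 + x2 > 1 & x1 + x2 > 1] in
  let cond_b := [/\ x0 + x1 < 1, x0 + x2 < 1 & x1 + x2 < 1] in
  [/\ (mlf_triangle_type3 q0 q1 q2 <-> cond_a \/ cond_b),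
      (cond_a -> lattice_width Q =
         Num.min x0 (Num.min x1 x2) /
           (x0 * x1 * x2 + (1 - x0) * (1 - x1) * (1 - x2))) &
      (cond_a -> lattice_width Q <= 1 + 2 / Num.sqrt 3 /\
         (lattice_width Q = 1 + 2 / Num.sqrt 3 <->
            [/\ x0 = 1 / Num.sqrt 3, x1 = 1 / Num.sqrt 3 & x2 = 1 / Num.sqrt 3]))].
Proof. exact: main. Qed.
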